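(* Assume the setting described in the context (hypotheses on $f,v,\eta$, the mesh condition $h<1/C$ and the CFL condition). If $\rho^o_j\ge 0$ for all $j\in\mathbb{Z}$, then the approximate solution constructed by the scheme satisfies $\|\rho^n\|_{L^1}\le\|\rho^o\|_{L^1}$ for all $n\in\mathbb{N}$.
   Context: Let $C>0$ and let $f\in C^2(\mathbb{R}^+\times\mathbb{R}\times\mathbb{R};\mathbb{R})$ satisfy $\sup_{t,x,\rho}|\partial_\rho f(t,x,\rho)|<+\infty$, $\sup_{t,x}|\partial_x f(t,x,\rho)|< C|\rho|$ and $\sup_{t,x}|\partial^2_{xx} f(t,x,\rho)|< C|\rho|$ for all $\rho$, and $f(t,x,0)=0$ for all $t,x$. Let $v\in (C^2\cap W^{1,\infty})(\mathbb{R};\mathbb{R})$ and $\eta\in (C^2\cap W^{2,\infty})(\mathbb{R};\mathbb{R})$. These are the data of the nonlocal conservation law $\partial_t\rho+\partial_x\big(f(t,x,\rho)\,v(\rho*\eta)\big)=0$, $\rho(0,x)=\rho^o(x)$, with $\rho^o\in L^\infty(\mathbb{R})$. Numerical scheme: fix a space step $h>0$ and time step $\tau>0$, set $\lambda=\tau/h$, $x_j=jh$, $x_{j+1/2}=(j+\tfrac12)h$, $t^n=n\tau$. Assume $h<1/C$ and the CFL condition $\lambda\,(1+2\|\partial_\rho f\|_{L^\infty})\|v\|_{L^\infty}\le 1/6$. Set $\rho^o_j=\frac1h\int_{x_{j-1/2}}^{x_{j+1/2}}\rho^o(x)\,dx$ and $\rho^{n+1}_j=\rho^n_j-\lambda\big(\mathbf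 f^n_{j+1/2}(\rho^n_j,\rho^n_{j+1})-\mathbf f^n_{j-1/2}(\rho^n_{j-1},\rho^n_j)\big)$, where $\mathbf f^n_{j+1/2}(\rho_1,\rho_2)=\frac{f(t^n,x_{j+1/2},\rho_1)+f(t^n,x_{j+1/2},\rho_2)}{2}\,v(c^n_{j+1/2})-\frac{1}{6\lambda}(\rho_2-\rho_1)$, $c^n_{j+1/2}=\sum_{k\in\mathbb{Z}} h\,\rho^n_{k+1/2}\,\eta_{j+1/2-k}$, with $\rho^n_{k+1/2}$ a convex combination of $\rho^n_k$ and $\rho^n_{k+1}$, and $\eta_{m+1/2}=\frac1h\int_{x_m}^{x_{m+1}}\eta(x)\,dx$. Discrete norms: $\|\rho^n\|_{L^1}=\sum_{j\in\mathbb{Z}}h|\rho^n_j|$ (and $\|\rho^o\|_{L^1}$ is the $L^1$ norm of the initial datum). *)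

(* Defs.v *)
From HB Require Import structures.
From mathcomp Require Import all_boot all_order all_algebra.
From mathcomp Require Import all_classical all_reals all_analysis.
Set Implicit Arguments. Unset Strict Implicit. Unset Printing Implicit Defensive.
Import Order.TTheory GRing.Theory Num.Theory.
Import numFieldNormedType.Exports.
Local Open Scope classical_set_scope.
Local Open Scope ring_scope.

Section Defs.
Variable R : realType.

Definition unc3 (g : R -> R -> R -> R) : R * R * R -> R :=
  fun p => g p.1.1 p.1.2 p.2.

Definition pd_t (g : R -> R -> R -> R) : R -> R -> R -> R :=
  fun t x r => derive1 (fun s => g s x r) t.
Definition pd_x (g : R -> R -> R -> R) : R -> R -> R -> R :=
  fun t x r => derive1 (fun s => g t s r) x.
Definition pd_rho (g : R -> R -> R -> R) : R -> R -> R -> R :=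
  fun t x r => derive1 (fun s => g t x s) r.

Definition C1_R3 (g : R -> R -> R -> R) : Prop :=
  (forall t x r, derivable (fun s => g s x r) t 1 /\
                 derivable (fun s => g t s r) x 1 /\
                 derivable (fun s => g t x s) r 1) /\
  continuous (unc3 g) /\ continuous (unc3 (pd_t g)) /\
  continuous (unc3 (pd_x g)) /\ continuous (unc3 (pd_rho g)).

Definition C2_R3 (g : R -> R -> R -> R) : Prop :=
  C1_R3 g /\ C1_R3 (pd_t g) /\ C1_R3 (pd_x g) /\ C1_R3 (pd_rho g).

(* f in C^2(R^+ x R x R), R^+ = [0,+oo): f is the restriction to the closed
   half-space {t >= 0} of a C^2 function on R^3 *)
Definition C2_halfspace (f : R -> R -> R -> R) : Prop :=
  exists g, C2_R3 g /\ forall t x r, 0 <= t -> g t x r = f t x r.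

Definition C2_R1 (u : R -> R) : Prop :=
  (forall x, derivable u x 1) /\ (forall x, derivable (derive1 u) x 1) /\
  continuous (derive1 (derive1 u)).

(* W^{1,oo} (for a C^1 function: u and u' bounded) *)
Definition W1inf (u : R -> R) : Prop :=
  exists M, forall x, `|u x| <= M /\ `|derive1 u x| <= M.

(* W^{2,oo} (for a C^2 function: u, u', u'' bounded) *)
Definition W2inf (u : R -> R) : Prop :=
  exists M, forall x, `|u x| <= M /\ `|derive1 u x| <= M /\
                      `|derive1 (derive1 u) x| <= M.

Definition Linf (u : R -> R) : Prop :=
  measurable_fun setT u /\
  exists M : R, (lebesgue_measure [set x | M < `|u x|]%R) = 0%E.

(* sup norms (for continuous functions the L^oo norm is the sup) *)
Definition supnorm (u : R -> R) : R := sup [set `|u x| | x in setT].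
Definition supnorm_drho (f : R -> R -> R -> R) : R :=
  sup [set y | exists t x r, 0 <= t /\ y = `|pd_rho f t x r|].

(* h : space step, tau : time step, lambda = tau / h *)
Definition xhalf (h : R) (j : int) : R := (j%:~R + 2^-1) * h.

(* eta_{m+1/2} = 1/h int_{x_m}^{x_{m+1}} eta *)
Definition eta_half (eta : R -> R) (h : R) (m : int) : R :=
  h^-1 * Rintegral lebesgue_measure `[m%:~R * h, (m + 1)%:~R * h] eta.

Definition rho_init (rho0 : R -> R) (h : R) (j : int) : R :=
  h^-1 * Rintegral lebesgue_measure `[xhalf h (j - 1), xhalf h j] rho0.

Definition rho_half (theta : int -> R) (rho : int -> R) (k : int) : R :=
  theta k * rho k + (1 - theta k) * rho (k + 1).

(* c^n_{j+1/2} = sum_{k in Z} h rho^n_{k+1/2} eta_{j+1/2-k}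
   (as the limit of the symmetric partial sums) *)
Definition conv_c (eta : R -> R) (h : R) (theta : int -> R) (rho : int -> R)
  (j : int) : R :=
  limn (fun N : nat => \sum_(i < (N + N).+1)
          h * rho_half theta rho (i%:Z - N%:Z) *
          eta_half eta h (j - (i%:Z - N%:Z))).

Definition num_flux (f : R -> R -> R -> R) (v : R -> R) (lambda tn xjh cj : R)
  (r1 r2 : R) : R :=
  (f tn xjh r1 + f tn xjh r2) / 2 * v cj - (6 * lambda)^-1 * (r2 - r1).

Definition scheme_step (f : R -> R -> R -> R) (v eta : R -> R) (h tau : R)
  (theta : int -> R) (n : nat) (rho : int -> R) : int -> R :=
  let lambda := tau / h in
  let tn := n%:R * tau in
  let F j := num_flux f v lambda tn (xhalf h j) (conv_c eta h theta rho j)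
                      (rho j) (rho (j + 1)) in
  fun j => rho j - lambda * (F j - F (j - 1)).

Fixpoint scheme (f : R -> R -> R -> R) (v eta rho0 : R -> R) (h tau : R)
  (theta : nat -> int -> R) (n : nat) : int -> R :=
  match n with
  | 0 => rho_init rho0 h
  | n'.+1 => scheme_step f v eta h tau (theta n') n'
               (scheme f v eta rho0 h tau theta n')
  end.

Definition l1_disc (h : R) (rho : int -> R) : \bar R :=
  (\esum_(j in [set: int]) (h * `|rho j|)%:E)%E.

Definition L1_norm (u : R -> R) : \bar R :=
  (\int[lebesgue_measure]_x (`|u x|)%:E)%E.

End Defs.

(* Main.v *)
Require Import Defs.
From HB Require Import structures.
From mathcomp Require Import all_boot all_order all_algebra.
From mathcomp Require Import all_classical all_reals all_analysis.
From mathcomp Require Import measurable_realfun ring lra zify.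
Import Order.TTheory GRing.Theory Num.Theory.
Import numFieldNormedType.Exports.
Local Open Scope classical_set_scope.
Local Open Scope ring_scope.


Lemma drho_le (R : realType) (f : R -> R -> R -> R) :
  (exists M, forall t x r, 0 <= t -> `|pd_rho f t x r| <= M) ->
  forall t x r, 0 <= t -> `|pd_rho f t x r| <= supnorm_drho f.
Proof.
move=> [M hM] t x r t0; apply: ub_le_sup.
  by exists M => y [t' [x' [r' [t0' ->]]]]; exact: hM.
by exists t, x, r.
Qed.

Lemma f_lip (R : realType) (f : R -> R -> R -> R) :
  C2_halfspace f ->
  (exists M, forall t x r, 0 <= t -> `|pd_rho f t x r| <= M) ->
  (forall t x, 0 <= t -> f t x 0 = 0) ->
  forall t x r, 0 <= t -> `|f t x r| <= supnorm_drho f * `|r|.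
Proof.
move=> [g [[[hd _] _] hfg]] hM f0 t x r t0.
set F := fun s => f t x s.
have FE : F = fun s => g t x s by apply/funext => s; rewrite /F hfg.
have dF : forall s : R, derivable F s 1 by move=> s; rewrite FE; case: (hd t x s) => _ [].
have dF' : forall s : R, is_derive s 1 F (derive1 F s).
  by move=> s; rewrite derive1E; apply: derivableP.
have cF : forall a b : R, {within `[a, b], continuous F}.
  by move=> a b; apply: derivable_within_continuous => s _.
have bd : forall c : R, `|derive1 F c| <= supnorm_drho f.
  move=> c; have := @drho_le R f hM t x c t0; rewrite /pd_rho. exact.
have F0 : F 0 = 0 by rewrite /F f0.
case: (leP 0 r) => r0.
  have [c _ E] := MVT_segment r0 (fun s _ => dF' s) (cF 0 r).
  rewrite F0 subr0 in E; rewrite -/(F r) E subr0 normrM (ger0_norm r0).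
  by apply: ler_wpM2r => //; exact: bd.
have [c _ E] := MVT_segment (ltW r0) (fun s _ => dF' s) (cF r 0).
rewrite F0 sub0r in E.
rewrite -/(F r) -normrN E sub0r normrM (ltr0_norm r0).
rewrite normrN (ltr0_norm r0); apply: ler_wpM2r; [rewrite oppr_ge0 ltW // | exact: bd].
Qed.


Definition wseq (N : nat) : seq int := [seq (i%:Z - N%:Z)%R | i <- iota 0 (N + N).+1].

Lemma mem_wseq N j : (j \in wseq N) = (- (N%:Z) <= j <= N%:Z).
Proof.
apply/mapP/idP.
  move=> [i]; rewrite mem_iota add0n => /andP[_ hi] ->.
  apply/andP; split; lia.
move=> /andP[h1 h2]; exists (absz (j + N%:Z)); last by lia.
rewrite mem_iota add0n; apply/andP; split; lia.
Qed.

Lemma uniq_wseq N : uniq (wseq N).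
Proof.
rewrite map_inj_uniq ?iota_uniq // => a b /= h; lia.
Qed.

Lemma wseq_cover (s : seq int) : exists N, {subset s <= wseq N}.
Proof.
exists (\max_(j <- s) absz j) => j js; rewrite mem_wseq.
have := @leq_bigmax_seq _ s xpredT absz j js erefl.
set m := \max_(_ <- _) _; move=> h; apply/andP; split; lia.
Qed.

Lemma wseq_mono N M : (N <= M)%N -> {subset wseq N <= wseq M}.
Proof. move=> NM j; rewrite !mem_wseq => /andP[h1 h2]; apply/andP; split; lia. Qed.

Lemma sum_subset (R : numDomainType) (a : int -> R) (s t : seq int) :
  (forall j, 0 <= a j) -> uniq s -> {subset s <= t} -> uniq t ->
  \sum_(j <- s) a j <= \sum_(j <- t) a j.
Proof.
move=> a0 us st ut.
rewrite (perm_big [seq j <- t | j \in s]); last first.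
  apply: uniq_perm => //; first exact: filter_uniq.
  by move=> x; rewrite mem_filter; case xs: (x \in s) => //=; rewrite (st _ xs).
rewrite big_filter big_mkcond /=; apply: ler_sum => j _.
by case: ifP.
Qed.

Lemma wsum_tele (R : numDomainType) (a G : int -> R) (lam : R) M :
  \sum_(j <- wseq M) (a j - lam * (G j - G (j - 1))) =
  \sum_(j <- wseq M) a j - lam * (G M%:Z - G (- (M%:Z) - 1)).
Proof.
rewrite sumrB -mulr_sumr /wseq !big_map.
congr (_ - lam * _).
have -> : iota 0 (M + M).+1 = index_iota 0 (M + M).+1 by rewrite /index_iota subn0.
rewrite (@telescope_sumr_eq _ 0 (M + M).+1 (fun k : nat => G (k%:Z - M%:Z - 1))) //.
  congr (G _ - G _); lia.
move=> k _ /=; congr (G _ - G _); lia.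
Qed.


Lemma prod_bd (R : realType) (lam L V F W r : R) :
  0 <= L -> 0 <= V -> 0 < lam -> lam * (1 + 2 * L) * V <= 6^-1 ->
  0 <= r -> `|F| <= L * r -> `|W| <= V -> `|lam * (F * W)| <= r / 12.
Proof.
move=> L0 V0 l0 cfl r0 hF hW.
rewrite !normrM (gtr0_norm l0).
have h1 : `|F| * `|W| <= (L * r) * V by apply: ler_pM.
have h2 : lam * (L * V) <= 12^-1.
  have : 0 <= lam * V by apply: mulr_ge0 => //; apply: ltW.
  move: cfl; rewrite !mulrDr !mulrDl; lra.
have h3 : lam * (`|F| * `|W|) <= lam * ((L * r) * V) by apply: ler_wpM2l => //; apply: ltW.
have h4 : (lam * (L * V)) * r <= 12^-1 * r by apply: ler_wpM2r.
have -> : r / 12 = 12^-1 * r by rewrite mulrC.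
apply: (le_trans h3); apply: le_trans h4; rewrite le_eqVlt; apply/orP; left; apply/eqP; ring.
Qed.

Lemma sum_inj_bd (R : realType) (rho : int -> R) (sig : R) (g : nat -> int) N P :
  (forall s, uniq s -> \sum_(j <- s) rho j <= sig) -> injective g ->
  \sum_(i <- iota N P) rho (g i) <= sig.
Proof.
move=> hs ig; rewrite -(big_map g xpredT rho); apply: hs.
by rewrite map_inj_uniq ?iota_uniq.
Qed.

Lemma step_ok (R : realType) (fl : int -> R -> R) (vv : int -> R)
  (L V lam sig : R) (rho : int -> R) :
  0 <= L -> 0 <= V -> 0 < lam -> lam * (1 + 2 * L) * V <= 6^-1 ->
  (forall j r, `|fl j r| <= L * `|r|) -> (forall j, `|vv j| <= V) ->
  (forall j, 0 <= rho j) -> (forall s, uniq s -> \sum_(j <- s) rho j <= sig) ->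
  let G j := (fl j (rho j) + fl j (rho (j + 1))) / 2 * vv j
             - (6 * lam)^-1 * (rho (j + 1) - rho j) in
  let rho' j := rho j - lam * (G j - G (j - 1)) in
  (forall j, 0 <= rho' j) /\ (forall s, uniq s -> \sum_(j <- s) rho' j <= sig).
Proof.
move=> L0 V0 l0 cfl hf hv r0 hs G rho'.
have lk : lam * (6 * lam)^-1 = 6^-1.
  by rewrite invfM mulrCA mulfV ?mulr1 // gt_eqF.
have k0 : 0 < (6 * lam)^-1 by rewrite invr_gt0 mulr_gt0.
have hf' : forall j r, 0 <= r -> `|fl j r| <= L * r.
  by move=> j r rr; rewrite -{2}(ger0_norm rr).
have pb : forall j r, 0 <= r -> `|lam * (fl j r * vv j)| <= r / 12.
  by move=> j r rr; exact: (@prod_bd R _ _ _ _ _ _ L0 V0 l0 cfl rr (hf' j r rr) (hv j)).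
have pos : forall j, 0 <= rho' j.
  move=> j; rewrite /rho' /G subrK.
  set a := rho (j - 1); set b := rho j; set c := rho (j + 1).
  have := pb j b (r0 _); have := pb j c (r0 _).
  have := pb (j - 1) a (r0 _); have := pb (j - 1) b (r0 _).
  rewrite !ler_norml.
  have ha : 0 <= a by exact: r0. have hb : 0 <= b by exact: r0.
  have hc : 0 <= c by exact: r0.
  move: lk; set k := (6 * lam)^-1 => lk.
  have e1 : lam * (k * (c - b)) = (c - b) / 6 by rewrite mulrA lk mulrC.
  have e2 : lam * (k * (b - a)) = (b - a) / 6 by rewrite mulrA lk mulrC.
  move: e1 e2; rewrite !mulrBr; lra.
split => //.
set k := (6 * lam)^-1 in k0 lk G rho' pos *.
set K := L * V + k.
have K0 : 0 <= K by rewrite /K addr_ge0 ?mulr_ge0 // ltW.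
have FW : forall j r, 0 <= r -> `|fl j r * vv j| <= L * r * V.
  by move=> j r rr; rewrite normrM; apply: ler_pM; [exact: normr_ge0|exact: normr_ge0|exact: hf'|exact: hv].
have Gb : forall j, `|G j| <= K * (rho j + rho (j + 1)).
  move=> j; rewrite /G /K ler_norml.
  move: (FW j _ (r0 j)) (FW j _ (r0 (j + 1))); rewrite !ler_norml => /andP[a1 a2] /andP[b1 b2].
  have := r0 j; have := r0 (j + 1).
  have := mulr_ge0 (ltW k0) (r0 j).
  have := mulr_ge0 (ltW k0) (r0 (j + 1)).
  have := mulr_ge0 (mulr_ge0 L0 V0) (r0 j).
  have := mulr_ge0 (mulr_ge0 L0 V0) (r0 (j + 1)).
  move=> *; apply/andP; split; lra.
have sig0 : 0 <= sig by have := hs [::] erefl; rewrite big_nil.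
have wb : forall M, \sum_(j <- wseq M) rho' j <=
    sig + lam * K * (rho M%:Z + rho (M%:Z + 1) + rho (- M%:Z - 1) + rho (- M%:Z)).
  move=> M; rewrite /rho' wsum_tele.
  have h1 := hs _ (uniq_wseq M).
  have h2 := Gb M%:Z; have h3 := Gb (- M%:Z - 1).
  rewrite subrK in h3.
  have : `|lam * (G M%:Z - G (- M%:Z - 1))| <= lam * (K * (rho M%:Z + rho (M%:Z + 1)) + K * (rho (- M%:Z - 1) + rho (- M%:Z))).
    rewrite normrM (gtr0_norm l0); apply: ler_wpM2l; first exact: ltW.
    by apply: (le_trans (ler_normB _ _)); apply: lerD.
  rewrite ler_norml => /andP[h4 _].
  have -> : lam * K * (rho M%:Z + rho (M%:Z + 1) + rho (- M%:Z - 1) + rho (- M%:Z)) =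
     lam * (K * (rho M%:Z + rho (M%:Z + 1)) + K * (rho (- M%:Z - 1) + rho (- M%:Z))) by ring.
  lra.
have r'0 : forall j, 0 <= rho' j by exact: pos.
have main : forall N, \sum_(j <- wseq N) rho' j <= sig.
  move=> N; set B := \sum_(j <- wseq N) rho' j.
  have avg : forall P : nat, P%:R * B <= P%:R * sig + lam * K * (4 * sig).
    move=> P.
    have e : forall x : R, P%:R * x = \sum_(i <- iota N P) x.
      by move=> x; rewrite big_const_seq count_predT size_iota mulr_natl iter_addr_0.
    rewrite !e.
    apply: (@le_trans _ _ (\sum_(i <- iota N P) (sig + lam * K * (rho i%:Z + rho (i%:Z + 1) + rho (- i%:Z - 1) + rho (- i%:Z))))).
      rewrite big_seq_cond [X in _ <= X]big_seq_cond; apply: ler_sum => i /andP[].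
      rewrite mem_iota => /andP[Ni _] _.
      apply: le_trans (wb i); apply: sum_subset => //; [exact: uniq_wseq | exact: wseq_mono | exact: uniq_wseq].
    rewrite big_split /= -mulr_sumr lerD2l; apply: ler_wpM2l; first by rewrite mulr_ge0 // ltW.
    rewrite !big_split /=.
    have i1 := @sum_inj_bd R rho sig (fun i : nat => i%:Z) N P hs ltac:(move=> a b /= h; lia).
    have i2 := @sum_inj_bd R rho sig (fun i : nat => i%:Z + 1) N P hs ltac:(move=> a b /= h; lia).
    have i3 := @sum_inj_bd R rho sig (fun i : nat => - i%:Z - 1) N P hs ltac:(move=> a b /= h; lia).
    have i4 := @sum_inj_bd R rho sig (fun i : nat => - i%:Z) N P hs ltac:(move=> a b /= h; lia).
    simpl in i1, i2, i3, i4; lra.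
  rewrite leNgt; apply/negP => Bs.
  set c0 := lam * K * (4 * sig).
  have c00 : 0 <= c0 by rewrite /c0 !mulr_ge0 // ltW.
  have d0 : 0 < B - sig by rewrite subr_gt0.
  have hb := archi_boundP (divr_ge0 c00 (ltW d0)).
  set P := Num.bound (c0 / (B - sig)) in hb.
  rewrite ltr_pdivrMr // in hb.
  have := avg P; move: hb; rewrite /c0 mulrBr; lra.
move=> s us; have [N sN] := wseq_cover s.
apply: le_trans (main N); apply: sum_subset => //; exact: uniq_wseq.
Qed.


Lemma sum_disj_le (R : realType) (P : int -> bool) (y : \bar R) (s : seq int) :
  (0 <= y)%E -> uniq s -> (forall j k, P j -> P k -> j = k) ->
  (\sum_(j <- s) (if P j then y else 0) <= y)%E.
Proof.
move=> y0; elim: s => [|j s IH] /=; first by rewrite big_nil.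
move=> /andP[js us] dP; rewrite big_cons.
case: (boolP (P j)) => Pj.
  rewrite big1_seq ?adde0 // => k /andP[_ ks].
  case: (boolP (P k)) => // Pk.
  by move: js; rewrite (dP _ _ Pj Pk) ks.
by rewrite add0e; apply: IH.
Qed.

Lemma cells_disj (R : realType) (h : R) (x : R) (j k : int) : 0 < h ->
  x \in `]xhalf h (j - 1), xhalf h j] -> x \in `]xhalf h (k - 1), xhalf h k] -> j = k.
Proof.
move=> h0; rewrite !in_itv /= /xhalf => /andP[a1 a2] /andP[b1 b2].
have key : forall j k : int, (j < k)%R ->
   ((j%:~R + 2^-1) * h <= (((k - 1)%:~R : R) + 2^-1) * h).
  move=> j' k' jk; apply: ler_wpM2r; first exact: ltW.
  rewrite lerD2r ler_int; lia.
case: (ltgtP j k) => // jk.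
  have := key _ _ jk; move: a1 a2 b1 b2; move=> *; exfalso; lra.
have := key _ _ jk; move: a1 a2 b1 b2; move=> *; exfalso; lra.
Qed.

Lemma fine_le_abs (R : realType) (I : \bar R) : ((fine I)%:E <= `|I|)%E.
Proof. by case: I => [r||] //=; rewrite ?lee_fin ?ler_norm // leey. Qed.

Lemma init_bd (R : realType) (rho0 : R -> R) (h : R) : 0 < h ->
  measurable_fun setT rho0 -> (forall j, 0 <= rho_init rho0 h j) ->
  forall s : seq int, uniq s ->
  ((\sum_(j <- s) h * rho_init rho0 h j)%:E <= L1_norm rho0)%E.
Proof.
move=> h0 mr r0 s us.
set g := fun x : R => ((`|rho0 x|)%:E : \bar R).
set A := fun j : int => `]xhalf h (j - 1), xhalf h j]%classic.
have mg : measurable_fun [set: R] g.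
  apply/measurable_EFinP; apply: measurableT_comp; [exact: normr_measurable | exact: mr].
have mA : forall j, measurable (A j) by move=> j; exact: measurable_itv.
have mgA : forall j, measurable_fun [set: R] (g \_ (A j)).
  by move=> j; apply/(measurable_restrictT _ (mA j)); exact: measurable_funS mg.
have step : forall j, ((h * rho_init rho0 h j)%:E <=
    \int[lebesgue_measure]_x (g \_ (A j)) x)%E.
  move=> j; rewrite /rho_init mulrA mulfV ?gt_eqF // mul1r /Rintegral.
  apply: le_trans (fine_le_abs _ _) _.
  apply: le_trans.
    apply: le_abse_integral; first exact: measurable_itv.
    apply/measurable_EFinP; exact: measurable_funS mr.
  rewrite -integral_mkcond /A.
  rewrite -integral_itv_obnd_cbnd; first by [].
  exact: measurable_funS mg.
rewrite -sumEFin; apply: le_trans.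
  by apply: lee_sum => j _; exact: step.
rewrite -ge0_integral_sum //; last by move=> j x _; apply: erestrict_ge0 => y _; rewrite /g lee_fin normr_ge0.
apply: ge0_le_integral => //.
- by move=> x _; apply: sume_ge0 => j _; apply: erestrict_ge0 => y _; rewrite /g lee_fin normr_ge0.
- by apply: emeasurable_sum => j; exact: mgA.
move=> x _; rewrite /patch.
apply: sum_disj_le => //; first by rewrite /g lee_fin.
move=> j k; rewrite /A !in_setE /= => hj hk; exact: cells_disj h0 hj hk.
Qed.

Lemma v_le (R : realType) (v : R -> R) : W1inf v -> forall c, `|v c| <= supnorm v.
Proof.
move=> [M hM] c; apply: ub_le_sup; last by exists c.
by exists M => y [x _ <-]; case: (hM x).
Qed.

Theorem lemma2p4 (R : realType) (C : R) (f : R -> R -> R -> R)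
  (v eta rho0 : R -> R) (h tau : R) (theta : nat -> int -> R) :
  0 < C ->
  C2_halfspace f ->
  (exists M, forall t x r, 0 <= t -> `|pd_rho f t x r| <= M) ->
  (forall t x r, 0 <= t -> `|pd_x f t x r| <= C * `|r|) ->
  (forall t x r, 0 <= t -> `|pd_x (pd_x f) t x r| <= C * `|r|) ->
  (forall t x, 0 <= t -> f t x 0 = 0) ->
  C2_R1 v -> W1inf v ->
  C2_R1 eta -> W2inf eta ->
  Linf rho0 ->
  0 < h -> 0 < tau ->
  h < C^-1 ->
  (tau / h) * (1 + 2 * supnorm_drho f) * supnorm v <= 6^-1 ->
  (forall n k, 0 <= theta n k <= 1) ->
  (forall j, 0 <= rho_init rho0 h j) ->
  forall n : nat,
    (l1_disc h (scheme f v eta rho0 h tau theta n) <= L1_norm rho0)%E.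
Proof.
move=> C0 f2 hM _ _ f0 _ vW _ _ [mr _] h0 tau0 _ cfl _ ri0 n.
have L0 : 0 <= supnorm_drho f.
  apply: (le_trans _ (@drho_le R f hM 0 0 0 (lexx (0:R)))); exact: normr_ge0.
have V0 : 0 <= supnorm v by apply: (le_trans _ (@v_le R v vW 0)); exact: normr_ge0.
have l0 : 0 < tau / h by rewrite divr_gt0.
have S0 : (0 <= L1_norm rho0)%E by apply: integral_ge0 => x _; rewrite lee_fin normr_ge0.
have KA := @init_bd R rho0 h h0 mr ri0.
move: S0; case E : (L1_norm rho0) => [S| |] S0; last 2 first.
- by rewrite leey.
- by rewrite leeNy_eq in S0.
have inv : forall n, (forall j, 0 <= scheme f v eta rho0 h tau theta n j) /\
   (forall s, uniq s -> \sum_(j <- s) scheme f v eta rho0 h tau theta n j <= S / h).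
  elim => [|m [IH1 IH2]].
    split => // s us; have := KA s us; rewrite E lee_fin -mulr_sumr => hS.
    by rewrite ler_pdivlMr // mulrC.
  have tm : 0 <= m%:R * tau by rewrite mulr_ge0 // ltW.
  have := @step_ok R (fun j => f (m%:R * tau) (xhalf h j))
     (fun j => v (conv_c eta h (theta m) (scheme f v eta rho0 h tau theta m) j))
     (supnorm_drho f) (supnorm v) (tau / h) (S / h)
     (scheme f v eta rho0 h tau theta m) L0 V0 l0 cfl
     (fun j r => @f_lip R f f2 hM f0 _ _ r tm) (fun j => @v_le R v vW _) IH1 IH2.
  by [].
have [I1 I2] := inv n.
rewrite /l1_disc; apply: ge_ereal_sup => _ [X [finX _] <-].
rewrite fsbig_finite // sumEFin lee_fin.
under eq_bigr do rewrite (ger0_norm (I1 _)).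
rewrite -mulr_sumr.
have := I2 _ (finmap.fset_uniq (fset_set X)); rewrite ler_pdivlMr // mulrC; exact.
Qed.
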